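(* Let $M$ be a $\bar{\mathfrak D}$-module (not necessarily a weight module) on which the subalgebra $\bar{\mathfrak D}^{+}$ acts locally finitely. Then: (i) $M$ contains a nonzero vector $v$ such that $\bar{\mathfrak D}^{+}v\subseteq\mathbb Cv$; (ii) if $M$ is simple, then $M$ is a Whittaker module or a highest weight module.
   Context: $\bar{\mathfrak D}$ is the Lie algebra with basis $\{d_m,h_r,\bar c_1,\bar c_2,\bar c_3:m,r\in\mathbb Z\}$, brackets $[d_m,d_n]=(m-n)d_{m+n}+\delta_{m+n,0}\frac{m^3-m}{12}\bar c_1$, $[d_m,h_r]=-rh_{m+r}+\delta_{m+r,0}(m^2+m)\bar c_2$, $[h_r,h_s]=r\delta_{r+s,0}\bar c_3$, with $\bar c_i$ central. $\bar{\mathfrak D}^{\pm}=\bigoplus_{n\ge1}(\mathbb Cd_{\pm n}\oplus\mathbb Ch_{\pm n})$ and $\bar{\mathfrak D}^0=\mathbb Cd_0\oplus\mathbb Ch_0\oplus\mathbb C\bar c_1\oplus\mathbb C\bar c_2\oplus\mathbb C\bar c_3$. $\bar{\mathfrak D}^+$ acts locally finitely on $M$ if every vector of $M$ lies in a finite-dimensional $\bar{\mathfrak D}^+$-submodule. A Whittaker module is a module generated by a nonzero vector $v$ with $xv=\varphi(x)v$ for all $x\in\bar{\mathfrak D}^+$, for some Lie algebra homomorphism $\varphi:\bar{\mathfrak D}^+\to\mathbb C$; a highest weight module is a module generated by a nonzero vector $v$ with $\bar{\mathfrak D}^+v=0$ and $\bar{\mathfrak D}^0v\subseteq\mathbb Cv$.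 *)

(* Defs.v *)
From HB Require Import structures.
From mathcomp Require Import all_boot all_order all_algebra.
From mathcomp Require Import complex reals.
Set Implicit Arguments. Unset Strict Implicit. Unset Printing Implicit Defensive.
Import Order.TTheory GRing.Theory Num.Theory.
Local Open Scope ring_scope.

(* The Lie algebra \bar D has basis {d_m, h_r, c1, c2, c3 : m r in Z}.
   A \bar D-module structure on a vector space M over a field F is the same
   thing as a family of linear operators indexed by that basis satisfying
   the bracket relations as commutators ([x,y] v = x (y v) - y (x v)). *)

Section Dbar.
Variable F : fieldType.
Variable M : lmodType F.

Definition delta0 (k : int) : F := (k == 0)%:R.

Record DbarModule := {
  dop : int -> {linear M -> M};
  hop : int -> {linear M -> M};
  c1op : {linear M -> M};
  c2op : {linear M -> M};
  c3op : {linear M -> M};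
  dd_rel : forall (m n : int) (v : M),
    dop m (dop n v) - dop n (dop m v)
    = (m - n)%:~R *: dop (m + n) v
      + (delta0 (m + n) * ((m ^+ 3 - m)%:~R / 12%:R)) *: c1op v;
  dh_rel : forall (m r : int) (v : M),
    dop m (hop r v) - hop r (dop m v)
    = (- r)%:~R *: hop (m + r) v
      + (delta0 (m + r) * (m ^+ 2 + m)%:~R) *: c2op v;
  hh_rel : forall (r s : int) (v : M),
    hop r (hop s v) - hop s (hop r v) = (r%:~R * delta0 (r + s)) *: c3op v;
  c1_central : (forall m v, c1op (dop m v) = dop m (c1op v))
            /\ (forall r v, c1op (hop r v) = hop r (c1op v))
            /\ (forall v, c1op (c2op v) = c2op (c1op v))
            /\ (forall v, c1op (c3op v) = c3op (c1op v));
  c2_central : (forall m v, c2op (dop m v) = dop m (c2op v))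
            /\ (forall r v, c2op (hop r v) = hop r (c2op v))
            /\ (forall v, c2op (c3op v) = c3op (c2op v));
  c3_central : (forall m v, c3op (dop m v) = dop m (c3op v))
            /\ (forall r v, c3op (hop r v) = hop r (c3op v))
}.

Variable A : DbarModule.

Definition in_line (v w : M) : Prop := exists a : F, w = a *: v.

Definition in_span (ws : seq M) (x : M) : Prop :=
  exists a : 'I_(size ws) -> F, x = \sum_(i < size ws) a i *: ws`_i.

(* \bar D^+ = span{d_n, h_n : n >= 1} acts locally finitely: every vector
   lies in a finite-dimensional (finitely spanned) \bar D^+-stable subspace *)
Definition Dplus_locally_finite : Prop :=
  forall v : M, exists ws : seq M,
    in_span ws v /\
    forall w, w \in ws -> forall n : int, (0 < n)%R ->
      in_span ws (dop A n w) /\ in_span ws (hop A n w).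

Definition Dplus_stable_line (v : M) : Prop :=
  forall n : int, (0 < n)%R -> in_line v (dop A n v) /\ in_line v (hop A n v).

Definition submodule (S : M -> Prop) : Prop :=
  [/\ S 0, (forall x y, S x -> S y -> S (x + y)),
      (forall (a : F) x, S x -> S (a *: x)),
      (forall m x, S x -> S (dop A m x) /\ S (hop A m x))
    & (forall x, S x -> S (c1op A x) /\ S (c2op A x) /\ S (c3op A x))].

Definition generated_by (v : M) : Prop :=
  forall S, submodule S -> S v -> forall x, S x.

Definition simple_module : Prop :=
  (exists x : M, x != 0) /\
  forall S, submodule S -> (exists x, S x /\ x != 0) -> forall x, S x.

(* Lie algebra homomorphisms phi : \bar D^+ -> C, given by their values
   phi(d_n) = phid n, phi(h_n) = phih n (n >= 1).  Since C is abelian, the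
   condition is phi([x,y]) = 0 for all basis elements x, y of \bar D^+:
   [d_m,d_n] = (m-n) d_{m+n}, [d_m,h_r] = -r h_{m+r}, [h_r,h_s] = 0 (m,n,r,s >= 1). *)
Definition Dplus_hom (phid phih : int -> F) : Prop :=
  (forall m n : int, (0 < m)%R -> (0 < n)%R -> (m - n)%:~R * phid (m + n) = 0)
  /\ (forall m r : int, (0 < m)%R -> (0 < r)%R -> (- r)%:~R * phih (m + r) = 0).

Definition whittaker_module : Prop :=
  exists (v : M) (phid phih : int -> F),
    [/\ v != 0, Dplus_hom phid phih,
        (forall n : int, (0 < n)%R -> dop A n v = phid n *: v /\ hop A n v = phih n *: v)
      & generated_by v].

Definition highest_weight_module : Prop :=
  exists v : M,
    [/\ v != 0,
        (forall n : int, (0 < n)%R -> dop A n v = 0 /\ hop A n v = 0),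
        [/\ in_line v (dop A 0 v), in_line v (hop A 0 v), in_line v (c1op A v),
            in_line v (c2op A v) & in_line v (c3op A v)]
      & generated_by v].

End Dbar.

(* Main.v *)
Require Import Defs.
From HB Require Import structures.
From mathcomp Require Import all_boot all_order all_algebra.
From mathcomp Require Import complex reals.
From mathcomp Require Import zify ring.
From Stdlib Require Import ClassicalEpsilon Classical.
Import Order.TTheory GRing.Theory Num.Theory.
Set Implicit Arguments. Unset Strict Implicit. Unset Printing Implicit Defensive.
Local Open Scope ring_scope.
Section Core.
Variable F : numClosedFieldType.
Variable n : nat.
Implicit Types U V E A B C : 'M[F]_n.

Definition resmx U A := row_base U *m A *m pinvmx (row_base U).

Lemma rb_sub U A : (U *m A <= U)%MS -> (row_base U *m A <= row_base U)%MS.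
Proof.
move=> h.
have hb : (row_base U <= U)%MS by rewrite eq_row_base.
have hb' : (U <= row_base U)%MS by rewrite eq_row_base.
apply: submx_trans hb'; apply: submx_trans h; exact: submxMr.
Qed.

Lemma resmxE U A : (U *m A <= U)%MS -> resmx U A *m row_base U = row_base U *m A.
Proof. by move=> h; rewrite /resmx mulmxKpV // rb_sub. Qed.

Lemma sub_from U (v : 'rV[F]_n) (X Y : 'M[F]_n) : (v <= U)%MS -> U *m X = U *m Y -> v *m X = v *m Y.
Proof. by move=> /submxP[W ->] h; rewrite -!mulmxA h. Qed.

Lemma subm_from (V U : 'M[F]_n) (X Y : 'M[F]_n) : (V <= U)%MS -> U *m X = U *m Y -> V *m X = V *m Y.
Proof. by move=> /submxP[W ->] h; rewrite -!mulmxA h. Qed.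

Lemma eig_in U A : U != 0 -> (U *m A <= U)%MS ->
  exists l (v : 'rV[F]_n), [/\ v != 0, (v <= U)%MS & v *m A = l *: v].
Proof.
move=> U0 hA.
have r0 : \rank U != 0%N by rewrite mxrank_eq0.
have : size (char_poly (resmx U A)) != 1%N by rewrite size_char_poly eqSS.
case/closed_rootP => l; rewrite -eigenvalue_root_char => /eigenvalueP[y hy y0].
exists l, (y *m row_base U); split.
- apply: contra y0 => /eqP h; apply/eqP; apply: (row_free_inj (row_base_free U)).
  by rewrite /= h mul0mx.
- by apply: submx_trans (submxMl _ _) _; rewrite eq_row_base.
- by rewrite -mulmxA -resmxE // mulmxA hy scalemxAl.
Qed.

Lemma tr_in U A B (mu : F) : U != 0 -> (U *m A <= U)%MS -> (U *m B <= U)%MS ->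
  U *m (A *m B - B *m A) = mu *: U -> mu = 0.
Proof.
move=> U0 hA hB h.
have r0 : \rank U != 0%N by rewrite mxrank_eq0.
have e : (resmx U A *m resmx U B - resmx U B *m resmx U A) = mu%:M.
  apply: (row_free_inj (row_base_free U)) => /=.
  rewrite mulmxBl -!(mulmxA (resmx U _)) (resmxE hB) (resmxE hA) !(mulmxA (resmx U _) (row_base U)) (resmxE hB) (resmxE hA) mul_scalar_mx -!(mulmxA (row_base U)) -mulmxBr.
  have /submxP[W ->] : (row_base U <= U)%MS by rewrite eq_row_base.
  by rewrite -mulmxA h scalemxAr.
have := congr1 mxtrace e.
rewrite mxtrace_scalar raddfB /= mxtrace_mulC subrr => /esym/eqP.
by rewrite -mulr_natr mulf_eq0 pnatr_eq0 (negbTE r0) orbF => /eqP.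
Qed.

Lemma stabE U A B l : (U *m B <= U)%MS -> U *m (A *m B) = U *m (B *m A) ->
  ((U :&: eigenspace A l) *m B <= U :&: eigenspace A l)%MS.
Proof.
move=> hB hc; set E := (U :&: _)%MS.
have EU : (E <= U)%MS by apply: capmxSl.
have EA : E *m A = l *: E by apply/eigenspaceP; apply: capmxSr.
rewrite sub_capmx; apply/andP; split.
  by apply: submx_trans hB; apply: submxMr.
apply/eigenspaceP.
rewrite -mulmxA (subm_from EU (esym hc)) mulmxA EA scalemxAl //.
Qed.

End Core.
Section PhaseB.
Variable F : numClosedFieldType.
Variable n : nat.
Variables D H : nat -> 'M[F]_n.
Hypothesis R1 : forall a b, (0 < a)%N -> (0 < b)%N ->
  D b *m D a - D a *m D b = (a%:R - b%:R) *: D (a + b)%N.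
Hypothesis R2 : forall a b, (0 < a)%N -> (0 < b)%N ->
  H b *m D a - D a *m H b = (- b%:R) *: H (a + b)%N.
Hypothesis R3 : forall a b, (0 < a)%N -> (0 < b)%N -> H b *m H a = H a *m H b.

Definition stab (U : 'M[F]_n) := forall j, (0 < j)%N ->
  (U *m D j <= U)%MS /\ (U *m H j <= U)%MS.

Lemma comm_from (U X Y Z : 'M[F]_n) (g : F) : X *m Y - Y *m X = g *: Z ->
  U *m Z = 0 -> U *m (X *m Y) = U *m (Y *m X).
Proof.
move=> e h; apply/eqP; rewrite -subr_eq0 -mulmxBr e -scalemxAr h scaler0 //.
Qed.

Lemma kill (U C A B : 'M[F]_n) (g : F) : U != 0 -> stab U -> (U *m C <= U)%MS ->
  (forall j, (0 < j)%N -> U *m (C *m D j) = U *m (D j *m C) /\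
                          U *m (C *m H j) = U *m (H j *m C)) ->
  (forall V, stab V -> (V *m A <= V)%MS /\ (V *m B <= V)%MS) ->
  g != 0 -> B *m A - A *m B = g *: C ->
  exists V : 'M[F]_n, [/\ V != 0, stab V, (V <= U)%MS & V *m C = 0].
Proof.
move=> U0 sU sC hc hAB g0 e.
have [l [v [v0 vU vC]]] := eig_in U0 sC.
set E := (U :&: eigenspace C l)%MS.
have vE : (v <= E)%MS.
  by rewrite sub_capmx vU; apply/eigenspaceP.
have E0 : E != 0.
  by apply: contra v0 => /eqP E0; move: vE; rewrite E0 submx0.
have EU : (E <= U)%MS by apply: capmxSl.
have EC : E *m C = l *: E by apply/eigenspaceP; apply: capmxSr.
have sE : stab E.
  move=> j j0; have [h1 h2] := sU j j0; have [c1 c2] := hc j j0.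
  by split; apply: stabE.
have [sA sB] := hAB E sE.
have l0 : - g * l = 0.
  apply: (tr_in E0 sA sB).
  rewrite -opprB mulmxN e -scalemxAr EC scalerA mulNr scaleNr //.
have l00 : l = 0 by move/eqP: l0; rewrite mulf_eq0 oppr_eq0 (negbTE g0) /= => /eqP.
by exists E; split => //; rewrite EC l00 scale0r.
Qed.

Definition Q k := exists U : 'M[F]_n, [/\ U != 0, stab U &
  forall j, (k <= j)%N -> U *m D j = 0 /\ U *m H j = 0].

Lemma vanish_sub (V U X : 'M[F]_n) : (V <= U)%MS -> U *m X = 0 -> V *m X = 0.
Proof. by move=> /submxP[W ->] h; rewrite -mulmxA h mulmx0. Qed.

Lemma stepH k (U : 'M[F]_n) : (2 <= k)%N -> U != 0 -> stab U ->
  (forall j, (k < j)%N -> U *m D j = 0 /\ U *m H j = 0) ->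
  exists V : 'M[F]_n, [/\ V != 0, stab V, (V <= U)%MS & V *m H k = 0].
Proof.
move=> k2 U0 sU hv.
have k1 : (0 < k - 1)%N by rewrite subn_gt0.
have ek : (1 + (k - 1))%N = k by rewrite addnC subnK // ltnW.
apply: (@kill U (H k) (D 1) (H (k - 1)) (- (k - 1)%:R)) => //.
- by case: (sU k (ltnW k2)).
- move=> j j0; split.
    apply: (@comm_from _ _ _ (H (j + k)) (- k%:R)).
      by rewrite R2 // ltnW.
    by case: (hv (j + k)%N _) => //; rewrite -addn1 addnC leq_add2r.
  by rewrite R3 // ltnW.
- move=> V sV; split; [by case: (sV 1%N _) | by case: (sV (k-1)%N _)].
- by rewrite oppr_eq0 pnatr_eq0 -lt0n.
- by rewrite R2 // ek.
Qed.

Lemma stepD k (U : 'M[F]_n) : (3 <= k)%N -> U != 0 -> stab U ->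
  (forall j, (k < j)%N -> U *m D j = 0 /\ U *m H j = 0) ->
  exists V : 'M[F]_n, [/\ V != 0, stab V, (V <= U)%MS & V *m D k = 0].
Proof.
move=> k3 U0 sU hv.
have k1 : (0 < k - 1)%N by rewrite subn_gt0 ltnW.
have ek : (1 + (k - 1))%N = k by rewrite addnC subnK // ltnW // ltnW.
have kj : forall j, (0 < j)%N -> (k < j + k)%N.
  by move=> j j0; rewrite -addn1 addnC leq_add2r.
apply: (@kill U (D k) (D 1) (D (k - 1)) (1 - (k - 1)%:R)) => //.
- by case: (sU k _) => //; rewrite ltnW // ltnW.
- move=> j j0; split.
    apply: (@comm_from _ _ _ (D (j + k)) (j%:R - k%:R)).
      by rewrite R1 // ltnW // ltnW.
    by case: (hv (j + k)%N (kj j j0)).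
  apply: (@comm_from _ _ _ (H (k + j)) (j%:R)).
    by rewrite -opprB R2 ?scaleNr ?opprK // ltnW // ltnW.
  by case: (hv (k + j)%N _) => //; rewrite addnC kj.
- move=> V sV; split; [by case: (sV 1%N _) | by case: (sV (k-1)%N _)].
- by rewrite subr_eq0 eq_sym pnatr_eq1; apply/eqP => h; move: k3; lia.
- by rewrite R1 // ek.
Qed.

End PhaseB.
Section PhaseB2.
Variable F : numClosedFieldType.
Variable n : nat.
Variables D H : nat -> 'M[F]_n.
Hypothesis R1 : forall a b, (0 < a)%N -> (0 < b)%N ->
  D b *m D a - D a *m D b = (a%:R - b%:R) *: D (a + b)%N.
Hypothesis R2 : forall a b, (0 < a)%N -> (0 < b)%N ->
  H b *m D a - D a *m H b = (- b%:R) *: H (a + b)%N.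
Hypothesis R3 : forall a b, (0 < a)%N -> (0 < b)%N -> H b *m H a = H a *m H b.

Notation Q := (Q D H).
Notation stab := (stab D H).

Lemma Qstep k : (3 <= k)%N -> Q k.+1 -> Q k.
Proof.
move=> k3 [U [U0 sU hU]].
have [V1 [V10 sV1 V1U V1D]] := stepD R1 R2 k3 U0 sU hU.
have hV1 : forall j, (k < j)%N -> V1 *m D j = 0 /\ V1 *m H j = 0.
  by move=> j kj; have [a b] := hU j kj; split; apply: vanish_sub V1U _.
have [V2 [V20 sV2 V2V1 V2H]] := stepH R2 R3 (ltnW k3) V10 sV1 hV1.
exists V2; split => // j; rewrite leq_eqVlt => /orP[/eqP <- | kj].
  by split => //; apply: vanish_sub V2V1 V1D.
by have [a b] := hV1 j kj; split; apply: vanish_sub V2V1 _.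
Qed.

Lemma Qdown t : Q (3 + t) -> Q 3.
Proof.
elim: t => [|t IH] // h; apply: IH; apply: Qstep; first by rewrite leq_addr.
by rewrite -addnS.
Qed.

Lemma cap_nz (U A : 'M[F]_n) l (v : 'rV[F]_n) : (v <= U)%MS -> v != 0 ->
  v *m A = l *: v -> (U :&: eigenspace A l)%MS != 0.
Proof.
move=> vU v0 vA; apply: contra v0 => /eqP E0.
have : (v <= U :&: eigenspace A l)%MS by rewrite sub_capmx vU; apply/eigenspaceP.
by rewrite E0 submx0.
Qed.

Lemma final : Q 3 -> exists v : 'rV[F]_n, v != 0 /\ forall j, (0 < j)%N ->
  (exists l, v *m D j = l *: v) /\ (exists m, v *m H j = m *: v).
Proof.
move=> [U [U0 sU hU]].
have [V [V0 sV VU VH]] := stepH R2 R3 (leqnn 2) U0 sU hU.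
have hV : forall j, (3 <= j)%N -> V *m D j = 0 /\ V *m H j = 0.
  by move=> j kj; have [a b] := hU j kj; split; apply: vanish_sub VU _.
have c12 : V *m (D 1 *m D 2) = V *m (D 2 *m D 1).
  apply: (@comm_from _ _ _ _ _ (D 3) (- (1%:R - 2%:R))).
    by rewrite -opprB R1 // scaleNr.
  by case: (hV 3%N _).
have c1h : V *m (D 1 *m H 1) = V *m (H 1 *m D 1).
  apply: (@comm_from _ _ _ _ _ (H 2) (- - 1%:R)).
    by rewrite -opprB R2 // -scaleNr.
  exact: VH.
have c2h : V *m (D 2 *m H 1) = V *m (H 1 *m D 2).
  apply: (@comm_from _ _ _ _ _ (H 3) (- - 1%:R)).
    by rewrite -opprB R2 // -scaleNr.
  by case: (hV 3%N _).
have [s1 _] := sV 1%N isT.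
have [l1 [v1 [v10 v1V v1D]]] := eig_in V0 s1.
set E1 := (V :&: eigenspace (D 1) l1)%MS.
have E10 : E1 != 0 by apply: cap_nz v1V v10 v1D.
have E1V : (E1 <= V)%MS by apply: capmxSl.
have sE12 : (E1 *m D 2 <= E1)%MS by apply: stabE => //; case: (sV 2%N isT).
have sE1h : (E1 *m H 1 <= E1)%MS by apply: stabE => //; case: (sV 1%N isT).
have [l2 [v2 [v20 v2E v2D]]] := eig_in E10 sE12.
set E2 := (E1 :&: eigenspace (D 2) l2)%MS.
have E20 : E2 != 0 by apply: cap_nz v2E v20 v2D.
have E2E1 : (E2 <= E1)%MS by apply: capmxSl.
have sE2h : (E2 *m H 1 <= E2)%MS.
  by apply: stabE => //; apply: subm_from E1V c2h.
have [m1 [v [v0 vE2 vH]]] := eig_in E20 sE2h.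
have vE1 : (v <= E1)%MS by apply: submx_trans vE2 E2E1.
have vV : (v <= V)%MS by apply: submx_trans vE1 E1V.
exists v; split => // j j0.
have vz : forall X : 'M[F]_n, V *m X = 0 -> v *m X = 0.
  by move=> X hX; move/submxP: vV => [W ->]; rewrite -mulmxA hX mulmx0.
case: j j0 => [//|[|[|j]]] _.
- split; last by exists m1.
  exists l1; apply/eigenspaceP; apply: submx_trans vE1 _; exact: capmxSr.
- split.
    exists l2; apply/eigenspaceP; apply: submx_trans vE2 _; exact: capmxSr.
  by exists 0; rewrite scale0r; apply: vz.
- by split; exists 0; rewrite scale0r; apply: vz; case: (hV j.+3 isT).
Qed.

End PhaseB2.
Section PhaseB3.
Variable F : numClosedFieldType.
Variable n : nat.
Variables D H : nat -> 'M[F]_n.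
Hypothesis R1 : forall a b, (0 < a)%N -> (0 < b)%N ->
  D b *m D a - D a *m D b = (a%:R - b%:R) *: D (a + b)%N.
Hypothesis R2 : forall a b, (0 < a)%N -> (0 < b)%N ->
  H b *m D a - D a *m H b = (- b%:R) *: H (a + b)%N.
Hypothesis R3 : forall a b, (0 < a)%N -> (0 < b)%N -> H b *m H a = H a *m H b.

Lemma brk_sum m (c : nat -> F) (X Y : nat -> 'M[F]_n) (P : 'M[F]_n) (g : nat -> F) :
  (forall i, (i < m)%N -> X i *m P - P *m X i = g i *: Y i) ->
  (\sum_(i < m) c i *: X i) *m P - P *m (\sum_(i < m) c i *: X i)
   = \sum_(i < m) (c i * g i) *: Y i.
Proof.
move=> h; rewrite mulmx_suml mulmx_sumr -sumrB; apply: eq_bigr => i _.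
by rewrite -scalemxAl -scalemxAr -scalerBr h // scalerA.
Qed.

Lemma shift_rel (K : nat -> 'M[F]_n) l a (c : nat -> F) : c 0%N = 0 ->
  \sum_(i < l.+2) c i *: K (a + i)%N = \sum_(i < l.+1) c i.+1 *: K (a.+1 + i)%N.
Proof.
move=> c0; rewrite big_ord_recl /= c0 scale0r add0r; apply: eq_bigr => i _.
by rewrite /bump leq0n add1n addSnnS.
Qed.

Lemma relD l : forall a (c : nat -> F), (0 < a)%N ->
  (exists2 i, (i <= l)%N & c i != 0) ->
  \sum_(i < l.+1) c i *: D (a + i)%N = 0 -> exists2 j, (0 < j)%N & D j = 0.
Proof.
elim: l => [|l IH] a c a0 [i il ci] S0.
  move: il; rewrite leqn0 => /eqP ei; subst i.
  move: S0; rewrite big_ord1 /= addn0 => /eqP; rewrite scaler_eq0 (negbTE ci) /=.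
  by move/eqP => h; exists a.
case: (eqVneq (c 0%N) 0) => c0.
  move: S0; rewrite shift_rel // => S0.
  apply: (IH a.+1 (fun i => c i.+1)) => //.
  case: i il ci => [|i] il ci; first by rewrite c0 eqxx in ci.
  by exists i.
set b := (a + l.+1)%N.
have b0 : (0 < b)%N by rewrite addn_gt0 a0.
have := @brk_sum l.+2 c (fun i => D (a + i)%N) (fun i => D (b + (a + i))%N) (D b)
   (fun i => b%:R - (a + i)%:R).
rewrite S0 mul0mx mulmx0 subrr => e.
have {e}e := esym (e (fun i _ => R1 b0 (leq_trans a0 (leq_addr i a)))).
move: e; rewrite big_ord_recr /= subrr mulr0 scale0r addr0 => e.
apply: (IH (a + b)%N (fun i => c i * (b%:R - (a + i)%:R))).
- by rewrite addn_gt0 a0.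
- exists 0%N => //; rewrite mulf_neq0 // addn0 /b natrD addrAC subrr add0r pnatr_eq0 //.
- by apply: (etrans _ e); apply: eq_bigr => j _; rewrite addnCA addnA.
Qed.

Lemma relH l : forall a (c : nat -> F), (0 < a)%N ->
  (exists2 i, (i <= l)%N & c i != 0) ->
  \sum_(i < l.+1) c i *: H (a + i)%N = 0 -> exists2 j, (0 < j)%N & H j = 0.
Proof.
elim: l => [|l IH] a c a0 [i il ci] S0.
  move: il; rewrite leqn0 => /eqP ei; subst i.
  move: S0; rewrite big_ord1 /= addn0 => /eqP; rewrite scaler_eq0 (negbTE ci) /=.
  by move/eqP => h; exists a.
case: (eqVneq (c 0%N) 0) => c0.
  move: S0; rewrite shift_rel // => S0.
  apply: (IH a.+1 (fun i => c i.+1)) => //.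
  case: i il ci => [|i] il ci; first by rewrite c0 eqxx in ci.
  by exists i.
set b := (a + l.+1)%N.
have pa : forall k, (0 < a + k)%N by move=> k; apply: leq_trans a0 (leq_addr k a).
have eX := @brk_sum l.+2 c (fun i => H (a + i)%N) (fun i => H (2 + (a + i))%N) (D 2)
   (fun i => - (a + i)%:R) (fun i _ => R2 (isT : (0 < 2)%N) (pa i)).
have eY1 := @brk_sum l.+2 c (fun i => H (a + i)%N) (fun i => H (1 + (a + i))%N) (D 1)
   (fun i => - (a + i)%:R) (fun i _ => R2 (isT : (0 < 1)%N) (pa i)).
rewrite S0 mul0mx mulmx0 subrr in eX.
rewrite S0 mul0mx mulmx0 subrr in eY1.
have eY2 := @brk_sum l.+2 (fun i => c i * - (a + i)%:R) (fun i => H (1 + (a + i))%N)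
   (fun i => H (1 + (1 + (a + i))))%N (D 1)
   (fun i => - (1 + (a + i))%:R) (fun i _ => R2 (isT : (0 < 1)%N) (addn_gt0 1 _)).
rewrite -eY1 mul0mx mulmx0 subrr in eY2.
have e : \sum_(i < l.+2) (c i * ((a + i)%:R * ((a + i)%:R - b%:R))) *: H (2 + (a + i))%N = 0.
  apply: (etrans _ (_ : (1 + b)%:R *: 0 + 0 = 0)); last by rewrite scaler0 addr0.
  rewrite [X in _ = _ *: X + _]eX [X in _ = _ + X]eY2 scaler_sumr -big_split /=.
  apply: eq_bigr => j _.
  rewrite scalerA (addnA 1 1) -scalerDl; congr (_ *: _).
  rewrite !natrD; ring.
move: e; rewrite big_ord_recr /= subrr mulr0 mulr0 scale0r addr0 => e.
apply: (IH (2 + a)%N (fun i => c i * ((a + i)%:R * ((a + i)%:R - b%:R)))).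
- by rewrite addn_gt0 a0 orbT.
- exists 0%N => //; rewrite addn0 mulf_neq0 // mulf_neq0 // ?pnatr_eq0 -?lt0n //.
  by rewrite subr_eq0 eqr_nat /b; apply/eqP; lia.
- by apply: (etrans _ e); apply: eq_bigr => j _; rewrite addnA.
Qed.

End PhaseB3.
Section PhaseB4.
Variable F : numClosedFieldType.
Variable n : nat.

Lemma dep (K : nat -> 'M[F]_n) : exists c : nat -> F,
  (exists2 i, (i <= n * n)%N & c i != 0) /\
  \sum_(i < (n * n).+1) c i *: K (1 + i)%N = 0.
Proof.
set Mt := \matrix_(i < (n * n).+1) mxvec (K (1 + i)%N).
have nf : ~~ row_free Mt.
  rewrite /row_free; apply/negP => /eqP h.
  by have := rank_leq_col Mt; rewrite h ltnn.
have kk0 : kermx Mt != 0 by rewrite kermx_eq0.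
have [i0 ri0] : exists i, row i (kermx Mt) != 0.
  apply/existsP; move: kk0; apply: contraR; rewrite negb_exists => /forallP h.
  by apply/eqP/row_matrixP => i; rewrite row0; apply/eqP/negPn.
set r := row i0 (kermx Mt).
have rM : r *m Mt = 0 by rewrite -row_mul mulmx_ker row0.
have [j0 rj0] : exists j, r 0 j != 0.
  apply/existsP; move: ri0; apply: contraR; rewrite negb_exists => /forallP h.
  apply/eqP/rowP => j; have := h j; rewrite negbK => /eqP ->; by rewrite mxE.
exists (fun j => r 0 (inord j)); split.
  by exists j0; [rewrite -ltnS ltn_ord | rewrite inord_val].
apply: (can_inj mxvecK); rewrite linear0 linear_sum /=.
apply: (etrans _ rM); rewrite mulmx_sum_row; apply: eq_bigr => i _.
by rewrite linearZ /= rowK inord_val.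
Qed.

Variables D H : nat -> 'M[F]_n.
Hypothesis R1 : forall a b, (0 < a)%N -> (0 < b)%N ->
  D b *m D a - D a *m D b = (a%:R - b%:R) *: D (a + b)%N.
Hypothesis R2 : forall a b, (0 < a)%N -> (0 < b)%N ->
  H b *m D a - D a *m H b = (- b%:R) *: H (a + b)%N.
Hypothesis R3 : forall a b, (0 < a)%N -> (0 < b)%N -> H b *m H a = H a *m H b.

Lemma bigN : exists N, (3 <= N)%N /\ forall j, (N <= j)%N -> D j = 0 /\ H j = 0.
Proof.
have [c [ci cs]] := dep D.
have [j0 j00 D0] := relD R1 (isT : (0 < 1)%N) ci cs.
have [d [di ds]] := dep H.
have [j1 j10 H0] := relH R2 (isT : (0 < 1)%N) di ds.
exists (2 * j0 + j1 + 3)%N; split; first by rewrite leq_addl.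
move=> m hm; split.
  have p : (0 < m - j0)%N by rewrite subn_gt0; lia.
  have := R1 j00 p; rewrite D0 mulmx0 mul0mx subrr subnKC; last by lia.
  move/esym/eqP; rewrite scaler_eq0 subr_eq0 eqr_nat.
  case/orP => /eqP // h; lia.
have p : (0 < m - j1)%N by rewrite subn_gt0; lia.
have := R2 p j10; rewrite H0 mulmx0 mul0mx subrr subnK; last by lia.
move/esym/eqP; rewrite scaler_eq0 oppr_eq0 pnatr_eq0 eqn0Ngt j10 /=.
by move/eqP.
Qed.

Theorem phaseB : (0 < n)%N -> exists v : 'rV[F]_n, v != 0 /\ forall j, (0 < j)%N ->
  (exists l, v *m D j = l *: v) /\ (exists m, v *m H j = m *: v).
Proof.
move=> n0; have [N [N3 hN]] := bigN.
apply: (final R1 R2 R3); apply: (@Qdown _ _ D H R1 R2 R3 (N - 3)).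
rewrite subnKC //; exists 1%:M; split.
- apply/negP => /eqP h; have := mxrank1 F n; rewrite h mxrank0 => e.
  by rewrite -e in n0.
- by move=> j _; rewrite !submx1.
- by move=> j /hN [-> ->]; rewrite !mulmx0.
Qed.

End PhaseB4.
Section Basis.
Variable F : fieldType.
Variable M : lmodType F.

Definition comb (us : seq M) (c : nat -> F) := \sum_(i < size us) c i *: us`_i.
Definition spanP (us : seq M) (x : M) := exists c, x = comb us c.
Definition freeS (us : seq M) := forall c, comb us c = 0 -> forall i, (i < size us)%N -> c i = 0.
Definition subsp (S : M -> Prop) :=
  [/\ S 0, (forall x y, S x -> S y -> S (x + y)) & (forall a x, S x -> S (a *: x))].

Definition ofrow m (r : 'rV[F]_m) (i : nat) : F :=
  if insub i is Some j then r 0 j else 0.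

Lemma ofrowE m (r : 'rV[F]_m) (j : 'I_m) : ofrow r j = r 0 j.
Proof. by rewrite /ofrow valK. Qed.

Lemma choice_nat (T : Type) (P : nat -> T -> Prop) :
  (forall i, exists t, P i t) -> exists f : nat -> T, forall i, P i (f i).
Proof.
move=> h; exists (fun i => proj1_sig (constructive_indefinite_description _ (h i))).
by move=> i; case: (constructive_indefinite_description _ (h i)).
Qed.

Lemma in_spanE (ws : seq M) x : in_span ws x <-> spanP ws x.
Proof.
split.
  case=> a ->; exists (ofrow (\row_j a j)); apply: eq_bigr => i _.
  by rewrite ofrowE mxE.
case=> c ->; exists (fun j => c j); by [].
Qed.

Lemma spanP_subsp us : subsp (spanP us).
Proof.
split.
- by exists (fun _ => 0); rewrite /comb big1 // => i _; rewrite scale0r.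
- move=> x y [c ->] [d ->]; exists (fun i => c i + d i).
  by rewrite /comb -big_split; apply: eq_bigr => i _; rewrite scalerDl.
- move=> a x [c ->]; exists (fun i => a * c i).
  by rewrite /comb scaler_sumr; apply: eq_bigr => i _; rewrite scalerA.
Qed.

Lemma comb_sub S us c : subsp S -> (forall i, (i < size us)%N -> S us`_i) -> S (comb us c).
Proof.
move=> [S0 SD SZ] h; rewrite /comb.
elim/big_ind: _ => //; move=> i _; exact/SZ/h.
Qed.

Lemma comb_rcons us x c :
  comb (rcons us x) c = comb us c + c (size us) *: x.
Proof.
rewrite /comb size_rcons big_ord_recr /= nth_rcons ltnn eqxx; congr (_ + _).
by apply: eq_bigr => i _; rewrite nth_rcons ltn_ord.
Qed.

Lemma free_rcons us x : freeS us -> ~ spanP us x -> freeS (rcons us x).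
Proof.
move=> fu nx c; rewrite comb_rcons => e.
have cn : c (size us) = 0.
  apply/eqP; apply/negPn/negP => cn; apply: nx.
  exists (fun i => - (c (size us))^-1 * c i).
  rewrite /comb; under eq_bigr => i _ do rewrite -scalerA.
  rewrite -scaler_sumr -/(comb us c).
  have -> : comb us c = - (c (size us) *: x) by apply/eqP; rewrite -addr_eq0 e.
  by rewrite scalerN scaleNr opprK scalerA mulVf // scale1r.
move: e; rewrite cn scale0r addr0 => e i; rewrite size_rcons ltnS leq_eqVlt.
by case/orP => [/eqP -> // | ?]; apply: fu.
Qed.

Lemma free_bound ws us : (forall i, (i < size us)%N -> spanP ws us`_i) -> freeS us ->
  (size us <= size ws)%N.
Proof.
move=> hs fu; rewrite leqNgt; apply/negP => lt.
have [cs hcs] : exists cs : nat -> nat -> F,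
    forall i, (i < size us)%N -> us`_i = comb ws (cs i).
  apply: (@choice_nat _ (fun i c => (i < size us)%N -> us`_i = comb ws c)) => i.
  case: (ltnP i (size us)) => h.
    by have [c e] := hs i h; exists c.
  by exists (fun _ => 0).
set P := \matrix_(i < size us, j < size ws) cs i j.
have nf : ~~ row_free P.
  rewrite /row_free; apply/negP => /eqP h.
  by have := rank_leq_col P; rewrite h leqNgt lt.
have kk0 : kermx P != 0 by rewrite kermx_eq0.
have [i0 ri0] : exists i, row i (kermx P) != 0.
  apply/existsP; move: kk0; apply: contraR; rewrite negb_exists => /forallP h.
  apply/eqP/row_matrixP => i; have := h i; rewrite negbK row0 => /eqP -> //.
set r := row i0 (kermx P).
have rP : r *m P = 0 by rewrite -row_mul mulmx_ker row0.
have e : comb us (ofrow r) = 0.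
  rewrite /comb.
  under eq_bigr => i _ do rewrite (hcs i (ltn_ord i)) /comb scaler_sumr.
  rewrite exchange_big /= big1 // => j _.
  under eq_bigr => i _ do rewrite scalerA.
  rewrite -scaler_suml.
  have -> : \sum_(i < size us) ofrow r i * cs i j = (r *m P) 0 j.
    by rewrite mxE; apply: eq_bigr => i _; rewrite ofrowE !mxE.
  by rewrite rP mxE scale0r.
move/eqP: ri0; apply; apply/rowP => j; rewrite [RHS]mxE -ofrowE; exact: fu (ofrow r) e j (ltn_ord j).
Qed.

Lemma extract ws (S : M -> Prop) : subsp S -> (forall x, S x -> spanP ws x) ->
  exists bs, [/\ freeS bs, (forall i, (i < size bs)%N -> S bs`_i) &
                 forall x, S x -> spanP bs x].
Proof.
move=> sS Sw.
suff h : forall m us, (size ws - size us <= m)%N -> freeS us ->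
    (forall i, (i < size us)%N -> S us`_i) ->
    exists bs, [/\ freeS bs, (forall i, (i < size bs)%N -> S bs`_i) &
                 forall x, S x -> spanP bs x].
  by apply: (h (size ws) [::]) => //; rewrite subn0.
elim=> [|m IH] us hm fu su;
  (case: (classic (forall x, S x -> spanP us x)) => [all|nall]; first by exists us);
  (have [x [Sx nx]] : exists x, S x /\ ~ spanP us x by
     have [x hx] := not_all_ex_not _ _ nall; exists x; apply: imply_to_and);
  (have fu' := free_rcons fu nx);
  (have su' : forall i, (i < size (rcons us x))%N -> S (rcons us x)`_i by
     move=> i; rewrite size_rcons ltnS nth_rcons leq_eqVlt;
     case/orP => [/eqP ->|hi]; [rewrite ltnn eqxx // | rewrite hi; exact: su]);
  (have bd := free_bound (fun i hi => Sw _ (su' i hi)) fu'; rewrite size_rcons in bd).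
  by exfalso; move: hm bd; rewrite leqn0 subn_eq0 => h1 h2; move: (leq_trans h2 h1); rewrite ltnn.
by apply: (IH (rcons us x)) => //; rewrite size_rcons; move: hm bd; lia.
Qed.

Definition psi (bs : seq M) (r : 'rV[F]_(size bs)) := \sum_(i < size bs) r 0 i *: bs`_i.

Lemma psiB bs (r1 r2 : 'rV[F]_(size bs)) : psi (r1 - r2) = psi r1 - psi r2.
Proof.
by rewrite /psi -sumrB; apply: eq_bigr => i _; rewrite !mxE scalerBl.
Qed.

Lemma psiZ bs a (r : 'rV[F]_(size bs)) : psi (a *: r) = a *: psi r.
Proof.
by rewrite /psi scaler_sumr; apply: eq_bigr => i _; rewrite !mxE scalerA.
Qed.

Lemma psi_inj bs : freeS bs -> forall r : 'rV[F]_(size bs), psi r = 0 -> r = 0.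
Proof.
move=> fb r e; apply/rowP => j; rewrite [RHS]mxE -ofrowE; apply: fb (ltn_ord j).
by rewrite -e; apply: eq_bigr => i _; rewrite ofrowE.
Qed.

Lemma psi_injE bs : freeS bs -> forall r1 r2 : 'rV[F]_(size bs), psi r1 = psi r2 -> r1 = r2.
Proof.
move=> fb r1 r2 e; apply/eqP; rewrite -subr_eq0; apply/eqP/(psi_inj fb).
by rewrite psiB e subrr.
Qed.

Lemma opmx bs (f : {linear M -> M}) :
  (forall i, (i < size bs)%N -> spanP bs (f bs`_i)) ->
  exists Am : 'M[F]_(size bs), forall r, f (psi r) = psi (r *m Am).
Proof.
move=> hs.
have [cs hcs] : exists cs : nat -> nat -> F,
    forall i, (i < size bs)%N -> f bs`_i = comb bs (cs i).
  apply: (@choice_nat _ (fun i c => (i < size bs)%N -> f bs`_i = comb bs c)) => i.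
  case: (ltnP i (size bs)) => h.
    by have [c e] := hs i h; exists c.
  by exists (fun _ => 0).
exists (\matrix_(i < size bs, j < size bs) cs i j) => r.
rewrite /psi linear_sum /=.
under eq_bigr => i _ do rewrite linearZ /= (hcs i (ltn_ord i)) /comb scaler_sumr.
rewrite exchange_big /=; apply: eq_bigr => j _.
under eq_bigr => i _ do rewrite scalerA.
by rewrite -scaler_suml mxE; congr (_ *: _); apply: eq_bigr => i _; rewrite mxE.
Qed.

End Basis.
Section PartI.
Variable F : numClosedFieldType.
Variable M : lmodType F.
Variable A : DbarModule M.

Lemma natz_intr (a : nat) : ((a%:Z)%:~R : F) = a%:R. Proof. by []. Qed.

Lemma delta_pos (a b : nat) : (0 < a)%N -> delta0 F (a%:Z + b%:Z) = 0.
Proof. by move=> a0; rewrite /delta0 -PoszD eqz_nat addn_eq0 eqn0Ngt a0. Qed.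

Lemma mx_ext n (X Y : 'M[F]_n) : (forall r : 'rV[F]_n, r *m X = r *m Y) -> X = Y.
Proof. by move=> h; apply/row_matrixP => i; rewrite !rowE. Qed.

Lemma stabV (ws : seq M) (f : {linear M -> M}) :
  (forall x, x \in ws -> in_span ws (f x)) -> forall x, spanP ws x -> spanP ws (f x).
Proof.
move=> h x [c ->]; rewrite /comb linear_sum /=.
have [S0 SD SZ] := spanP_subsp ws.
elim/big_ind: _ => // i _; rewrite linearZ; apply: SZ; apply/in_spanE; apply: h.
exact: mem_nth.
Qed.

Theorem partI : Dplus_locally_finite A -> (exists x : M, x != 0) ->
  exists v : M, v != 0 /\ Dplus_stable_line A v.
Proof.
move=> LF [w w0]; have [ws [wsp hws]] := LF w.
have [bs [fb bV Vb]] := extract (spanP_subsp ws) (fun x h => h).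
have hf : forall f : {linear M -> M}, (forall x, x \in ws -> in_span ws (f x)) ->
    exists Am : 'M[F]_(size bs), forall r, f (psi r) = psi (r *m Am).
  move=> f hx; apply: opmx => i hi; apply: Vb; apply: (stabV hx); exact: bV.
have [Dm hD] : exists Dm : nat -> 'M[F]_(size bs), forall m, (0 < m)%N ->
    forall r, dop A m%:Z (psi r) = psi (r *m Dm m).
  apply: (@choice_nat _ (fun m Am => (0 < m)%N -> forall r, dop A m%:Z (psi r) = psi (r *m Am))).
  move=> m; case: (ltnP 0 m) => m0.
    have [Am h] := hf (dop A m%:Z) (fun x hx => (hws x hx m%:Z m0).1).
    by exists Am.
  by exists 0.
have [Hm hH] : exists Hm : nat -> 'M[F]_(size bs), forall m, (0 < m)%N ->
    forall r, hop A m%:Z (psi r) = psi (r *m Hm m).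
  apply: (@choice_nat _ (fun m Am => (0 < m)%N -> forall r, hop A m%:Z (psi r) = psi (r *m Am))).
  move=> m; case: (ltnP 0 m) => m0.
    have [Am h] := hf (hop A m%:Z) (fun x hx => (hws x hx m%:Z m0).2).
    by exists Am.
  by exists 0.
have n0 : (0 < size bs)%N.
  rewrite lt0n; apply/negP => /eqP e.
  have [c wc] := Vb w (proj1 (in_spanE ws w) wsp).
  by move: w0; rewrite wc /comb e big_ord0 eqxx.
have R1 : forall a b, (0 < a)%N -> (0 < b)%N ->
    Dm b *m Dm a - Dm a *m Dm b = (a%:R - b%:R) *: Dm (a + b)%N.
  move=> a b a0 b0; apply: mx_ext => r; apply: (psi_injE fb).
  rewrite mulmxBr psiB !mulmxA -!hD // -scalemxAr psiZ -hD ?addn_gt0 ?a0 //.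
  rewrite dd_rel delta_pos // mul0r scale0r addr0 PoszD intrB //.
have R2 : forall a b, (0 < a)%N -> (0 < b)%N ->
    Hm b *m Dm a - Dm a *m Hm b = (- b%:R) *: Hm (a + b)%N.
  move=> a b a0 b0; apply: mx_ext => r; apply: (psi_injE fb).
  rewrite mulmxBr psiB !mulmxA -hD // -hH // -hH // -hD // -scalemxAr psiZ -hH ?addn_gt0 ?a0 //.
  rewrite dh_rel delta_pos // mul0r scale0r addr0 PoszD intrN //.
have R3 : forall a b, (0 < a)%N -> (0 < b)%N -> Hm b *m Hm a = Hm a *m Hm b.
  move=> a b a0 b0; apply: mx_ext => r; apply: (psi_injE fb).
  rewrite !mulmxA -!hH //; apply/eqP; rewrite -subr_eq0 hh_rel.
  by rewrite addrC delta_pos // mulr0 scale0r.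
have [c [c0 hc]] := phaseB R1 R2 R3 n0.
exists (psi c); split.
  by apply: contra c0 => /eqP e; apply/eqP; apply: (psi_inj fb).
case=> [k|k] // k0; have [[l hl] [m hm]] := hc k k0.
by split; [exists l; rewrite hD // hl psiZ | exists m; rewrite hH // hm psiZ].
Qed.

End PartI.
Unset Implicit Arguments. Set Strict Implicit.
Local Open Scope complex_scope.

(* C = R[i] for R : realType (R is the real numbers up to isomorphism) *)

Theorem theorem5p9 (R : realType) (M : lmodType R[i]) (A : DbarModule M) :
  Dplus_locally_finite A ->
  ((exists x : M, x != 0) ->
     exists v : M, v != 0 /\ Dplus_stable_line A v)
  /\ (simple_module A -> whittaker_module A \/ highest_weight_module A).
Proof.
move=> LF; have pI := @partI _ _ A LF; split => // [[nz simp]].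
left; have [v [v0 sv]] := pI nz.
have [phid hd] : exists phid : int -> R[i], forall n : int, (0 < n)%R -> dop A n v = phid n *: v.
  have h : forall n : int, exists a : R[i], (0 < n)%R -> dop A n v = a *: v.
    move=> n; case: (boolP (0 < n)%R) => n0; last by exists 0.
    by have [[a ->] _] := sv n n0; exists a.
  exists (fun n => proj1_sig (constructive_indefinite_description _ (h n))).
  by move=> n; case: (constructive_indefinite_description _ (h n)) => a /=; apply.
have [phih hh] : exists phih : int -> R[i], forall n : int, (0 < n)%R -> hop A n v = phih n *: v.
  have h : forall n : int, exists a : R[i], (0 < n)%R -> hop A n v = a *: v.
    move=> n; case: (boolP (0 < n)%R) => n0; last by exists 0.
    by have [_ [a ->]] := sv n n0; exists a.
  exists (fun n => proj1_sig (constructive_indefinite_description _ (h n))).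
  by move=> n; case: (constructive_indefinite_description _ (h n)) => a /=; apply.
have dpos : forall m n : int, (0 < m)%R -> (0 < n)%R -> delta0 R[i] (m + n) = 0.
  by move=> m n m0 n0; rewrite /delta0 gt_eqF // addr_gt0.
exists v, phid, phih; split => //.
- split.
  + move=> m n m0 n0.
    suff /eqP : ((m - n)%:~R * phid (m + n)) *: v = 0.
      by rewrite scaler_eq0 (negbTE v0) orbF => /eqP.
    rewrite -scalerA -hd ?addr_gt0 //.
    have := dd_rel A m n v; rewrite dpos // mul0r scale0r addr0 => <-.
    by rewrite !hd // !linearZ /= !hd // !scalerA scalerN scalerA mulrC subrr.
  + move=> m r m0 r0.
    suff /eqP : ((- r)%:~R * phih (m + r)) *: v = 0.
      by rewrite scaler_eq0 (negbTE v0) orbF => /eqP.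
    rewrite -scalerA -hh ?addr_gt0 //.
    have := dh_rel A m r v; rewrite dpos // mul0r scale0r addr0 => <-.
    by rewrite hh // hd // !linearZ /= hh // hd // !scalerA scalerN scalerA mulrC subrr.
- by move=> n n0; split; [apply: hd | apply: hh].
- by move=> S sS Sv x; apply: simp sS _ x; exists v.
Qed.
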